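(* Let $K$ be a CM field of degree $2g$ with maximal totally real subfield $F$, and let $\mathcal{O}\subseteq K$ be an order with $\mathcal{O}\cap F=\mathcal{O}_F$. Let $\{\alpha_1,\dots,\alpha_g\}$, $\{\tau_1,\dots,\tau_{2g}\}$, $\{\omega_1,\dots,\omega_{2g}\}$ be $\mathbb{Z}$-bases of $\mathcal{O}_F$, $\mathcal{O}$, $\mathcal{O}_K$ respectively. Define $b_{i,j,k}\in\mathbb{Q}$ by $\alpha_i\omega_j=\sum_{k=1}^{2g}b_{i,j,k}\tau_k$, let $M_j$ be the $2g\times g$ matrix whose $(k,i)$ entry is $b_{i,j,k}$, and let $M$ be the $(2g)^2\times g$ matrix obtained by stacking $M_1,\dots,M_{2g}$ vertically. Let $d$ be the greatest common divisor of all integers $d'$ such that $d'M$ has integer entries, and let $H\in\mathbb{Z}^{g\times g}$ be the row Hermite normal form of $dM$ (with its zero rows removed). Then $H$ is invertible, and the ideal $\mathfrak{f}^+=\mathfrak{f}\cap\mathcal{O}_F$, where $\mathfrak{f}=\{\alpha\in K:\alpha\mathcal{O}_K\subseteq\mathcal{O}\}$ is the conductor ideal of $\mathcal{O}$, equals $\mathbb{Z}\beta_1+\dots+\mathbb{Z}\beta_g$, where $(\beta_1,\dots,\beta_g)=(\alpha_1,\dots,\alpha_g)\,dH^{-1}$. In other words, the algorithm that computes $b_{i,j,k}$, $M$, $d$, $H$ and outputs this $\mathbb{Z}$-basis correctly computes $\mathfrak{f}^+$.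
   Context: A CM field is a totally imaginary quadratic extension of a totally real number field; $F$ denotes that totally real subfield. The row Hermite normal form of an integer matrix $N$ is the (unique) Hermite normal form of the lattice spanned by the rows, obtained as $UN$ for a unimodular integer matrix $U$. The ideal $\mathfrak{f}\cap\mathcal{O}_F$ uniquely identifies orders of $K$ containing $\mathcal{O}_F$. *)

(* Defs.v *)
From HB Require Import structures.
From mathcomp Require Import all_boot all_order all_algebra all_field.
Set Implicit Arguments. Unset Strict Implicit. Unset Printing Implicit Defensive.
Import Order.TTheory GRing.Theory Num.Theory.
Local Open Scope ring_scope.

Section Defs.
Variable L : fieldExtType rat.

Definition integral (x : L) : Prop :=
  exists p : {poly int}, p \is monic /\ root (map_poly (fun z : int => z%:~R : L) p) x.

Definition zspan (n : nat) (v : 'I_n -> L) (x : L) : Prop :=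
  exists c : 'I_n -> int, x = \sum_(i < n) ((c i)%:~R : rat) *: v i.

Definition zfree (n : nat) (v : 'I_n -> L) : Prop :=
  forall c : 'I_n -> int, \sum_(i < n) ((c i)%:~R : rat) *: v i = 0 -> forall i, c i = 0.

Definition zbasis (n : nat) (v : 'I_n -> L) (S : L -> Prop) : Prop :=
  (forall x, S x <-> zspan v x) /\ zfree v.

Definition is_order (O : L -> Prop) : Prop :=
  [/\ O 1, (forall x y, O x -> O y -> O (x - y)),
      (forall x y, O x -> O y -> O (x * y)) &
      exists v : 'I_(\dim {:L}) -> L, zbasis v O].

Definition conductor (O : L -> Prop) (a : L) : Prop :=
  forall y, integral y -> O (a * y).

Definition totally_real (F : {subfield L}) : Prop :=
  forall s : {rmorphism subvs_of F -> algC}, forall x, s x \is Num.real.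

Definition totally_imaginary : Prop :=
  forall s : {rmorphism L -> algC}, exists x, s x \isn't Num.real.

Definition is_CM_with_real_subfield (F : {subfield L}) : Prop :=
  [/\ totally_real F, (\dim {:L} = 2 * \dim F)%N & totally_imaginary].
End Defs.

Definition is_rowHNF (m n : nat) (A : 'M[int]_(m, n)) : Prop :=
  exists (r : nat) (p : 'I_m -> 'I_n),
   [/\ (forall i : 'I_m, (r <= i)%N -> forall j, A i j = 0),
       (forall i : 'I_m, (i < r)%N -> 0 < A i (p i) /\
                                     forall j : 'I_n, (j < p i)%N -> A i j = 0),
       (forall i k : 'I_m, (i < k)%N -> (k < r)%N -> (p i < p k)%N) &
       (forall i k : 'I_m, (k < i)%N -> (i < r)%N -> 0 <= A k (p i) < A i (p i))].

Definition is_gcd_of (S : int -> Prop) (d : int) : Prop :=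
  [/\ 0 <= d, (forall x, S x -> (d %| x)%Z) &
      forall e, (forall x, S x -> (e %| x)%Z) -> (e %| d)%Z].

Definition int_mx (m n : nat) (A : 'M[rat]_(m, n)) : Prop :=
  exists N : 'M[int]_(m, n), A = map_mx (fun z : int => z%:~R) N.

Lemma stack_div_lt n (r : 'I_(n * n)) : (r %/ n < n)%N.
Proof.
case: n r => [|n] r; first by case: r.
by rewrite ltn_divLR // ltn_ord.
Qed.

Lemma stack_mod_lt n (r : 'I_(n * n)) : (r %% n < n)%N.
Proof. case: n r => [|n] r; first by case: r. by rewrite ltn_pmod. Qed.

(* vertical stacking of M_0, ..., M_(n-1), each M_j : n x g with (k,i) entry b i j k *)
Definition stackM (g n : nat) (b : 'I_g -> 'I_n -> 'I_n -> rat) : 'M[rat]_(n * n, g) :=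
  \matrix_(r < n * n, i < g)
     b i (Ordinal (stack_div_lt r)) (Ordinal (stack_mod_lt r)).

Lemma le_g_sq g : (g <= (2 * g) * (2 * g))%N.
Proof. by case: g => // g; rewrite -[X in (X <= _)%N]muln1 leq_mul // ?leq_pmull // muln_gt0. Qed.

Definition topblock (g : nat) (A : 'M[int]_((2 * g) * (2 * g), g)) : 'M[int]_g :=
  \matrix_(i < g, j < g) A (widen_ord (le_g_sq g) i) j.

(* Main.v *)
Require Import Defs.
From HB Require Import structures.
From mathcomp Require Import all_boot all_order all_algebra all_field.
From mathcomp Require Import zify ring.
Import Order.TTheory GRing.Theory Num.Theory.
Local Open Scope ring_scope.

Lemma commden (I : finType) (c : I -> rat) :
  exists D : int, D != 0 /\ forall i, exists z : int, D%:~R * c i = z%:~R.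
Proof.
exists (\prod_i denq (c i)); split.
  by apply/prodf_neq0 => i _; exact: denq_neq0.
move=> i; exists (numq (c i) * \prod_(j | j != i) denq (c j)).
rewrite (bigD1 i) //= !rmorphM /= numqE rmorph_prod /=.
by rewrite mulrAC; congr (_ * _); rewrite mulrC.
Qed.

Lemma qfree {L : fieldExtType rat} {n} {v : 'I_n -> L} : zfree v ->
  forall c : 'I_n -> rat, \sum_i c i *: v i = 0 -> forall i, c i = 0.
Proof.
move=> hz c hc.
have [D [D0 hD]] := @commden _ c.
have [z hzf] := fin_all_exists hD.
have hz0 : forall i, z i = 0.
  apply: hz.
  have -> : \sum_i (z i)%:~R *: v i = D%:~R *: \sum_i c i *: v i.
    rewrite scaler_sumr; apply: eq_bigr => i _; by rewrite scalerA hzf.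
  by rewrite hc scaler0.
move=> i.
have := hzf i; rewrite hz0 => /eqP; rewrite mulf_eq0 intr_eq0 (negbTE D0) /=.
by move/eqP.
Qed.

Lemma zspan_basis {L : fieldExtType rat} {n} (v : 'I_n -> L) j : zspan v (v j).
Proof.
exists (fun i => (i == j)%:R); rewrite (bigD1 j) //= eqxx scale1r big1 ?addr0 //.
by move=> i /negbTE ->; rewrite scale0r.
Qed.

Lemma zspan_comb (L : fieldExtType rat) a n (tau : 'I_n -> L) (f : 'I_a -> int)
  (w : 'I_a -> 'I_n -> int) :
  zspan tau (\sum_j (f j)%:~R *: \sum_k ((w j k)%:~R : rat) *: tau k).
Proof.
exists (fun k => \sum_j f j * w j k).
under eq_bigr do rewrite scaler_sumr.
rewrite exchange_big /=; apply: eq_bigr => k _.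
rewrite rmorph_sum scaler_suml; apply: eq_bigr => j _.
by rewrite scalerA rmorphM.
Qed.

Lemma int_mxP m n (A : 'M[rat]_(m, n)) :
  (forall i j, exists z : int, A i j = z%:~R) -> int_mx A.
Proof.
move=> h; exists (\matrix_(i, j) numq (A i j)); apply/matrixP => i j.
by rewrite !mxE; have [z ->] := h i j; rewrite numq_int.
Qed.

Lemma integral1 (L : fieldExtType rat) : integral (1 : L).
Proof.
exists ('X - 1%:P); split; first by rewrite monicXsubC.
by rewrite rmorphB /= map_polyX map_polyC /= rmorph1 root_XsubC.
Qed.

Lemma rjk_lt {n} (j k : 'I_n) : (j * n + k < n * n)%N.
Proof. have := ltn_ord j; have := ltn_ord k; nia. Qed.

Definition rjk {n} (j k : 'I_n) : 'I_(n * n) := Ordinal (rjk_lt j k).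

Lemma rjk_div n (j k : 'I_n) : Ordinal (stack_div_lt (rjk j k)) = j.
Proof.
apply: val_inj => /=; have n0 : (0 < n)%N by apply: leq_ltn_trans (ltn_ord j).
by rewrite divnMDl // divn_small // addn0.
Qed.

Lemma rjk_mod n (j k : 'I_n) : Ordinal (stack_mod_lt (rjk j k)) = k.
Proof. by apply: val_inj => /=; rewrite modnMDl modn_small. Qed.

Theorem mainTheorem1
  (L : fieldExtType rat) (g : nat) (F : {subfield L})
  (hdeg : \dim {:L} = (2 * g)%N)
  (hCM : is_CM_with_real_subfield F)
  (O : L -> Prop) (hO : is_order O)
  (hOF : forall x : L, (O x /\ x \in F) <-> (x \in F /\ integral x))
  (alpha : 'I_g -> L) (halpha : zbasis alpha (fun x => x \in F /\ integral x))
  (tau : 'I_(2 * g) -> L) (htau : zbasis tau O)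
  (omega : 'I_(2 * g) -> L) (homega : zbasis omega (@integral L))
  (b : 'I_g -> 'I_(2 * g) -> 'I_(2 * g) -> rat)
  (hb : forall i j, alpha i * omega j = \sum_(k < 2 * g) b i j k *: tau k)
  (d : int)
  (hd : is_gcd_of (fun d' : int => int_mx (d'%:~R *: stackM b)) d)
  (N : 'M[int]_((2 * g) * (2 * g), g))
  (hN : map_mx (fun z : int => z%:~R) N = d%:~R *: stackM b)
  (U : 'M[int]_((2 * g) * (2 * g))) (hU : U \in unitmx)
  (Hfull : 'M[int]_((2 * g) * (2 * g), g))
  (hH : U *m N = Hfull) (hHNF : is_rowHNF Hfull) :
  let H := topblock Hfull in
  let Hinv := invmx (map_mx (fun z : int => z%:~R : rat) H) in
  let beta := fun j : 'I_g => \sum_(i < g) (d%:~R * Hinv i j) *: alpha i in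
  [/\ (forall r : 'I_((2 * g) * (2 * g)), (g <= r)%N -> forall j, Hfull r j = 0),
      map_mx (fun z : int => z%:~R : rat) H \in unitmx &
      forall x : L, (conductor O x /\ (x \in F /\ integral x)) <-> zspan beta x].
Proof.
move=> H Hinv beta.
case: homega => homS homF; case: htau => htauS htauF; case: halpha => halS halF.
have part1 : forall r : 'I_((2 * g) * (2 * g)), (g <= r)%N -> forall j, Hfull r j = 0.
  move=> r hr j.
  have g0 : (0 < g)%N by apply: leq_ltn_trans (ltn_ord j).
  have [rr [p [h0 h1 h2 h3]]] := hHNF.
  apply: h0; apply: leq_trans hr; rewrite leqNgt; apply/negP => hgr.
  have gm : (g < (2 * g) * (2 * g))%N by nia.
  have key : forall k (hk : (k < (2 * g) * (2 * g))%N), (k < rr)%N ->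
      (k <= p (Ordinal hk))%N.
    elim=> [|k IH] hk hkr; first by [].
    have hk' : (k < (2 * g) * (2 * g))%N by apply: ltnW.
    have := h2 (Ordinal hk') (Ordinal hk) (ltnSn k) hkr.
    have := IH hk' (ltnW hkr). lia.
  have := key g gm hgr; have := ltn_ord (p (Ordinal gm)). lia.
have d0 : d != 0.
  have [D [D0 hD]] := @commden ('I_((2 * g) * (2 * g)) * 'I_g)%type
     (fun ij => stackM b ij.1 ij.2).
  have SD : int_mx (D%:~R *: stackM b).
    by apply: int_mxP => i j; have [z hz] := hD (i, j); exists z; rewrite mxE hz.
  case: hd => _ hdv _; have := hdv _ SD.
  by apply: contraTneq => ->; rewrite dvd0z.
have UK : forall p (A : 'M[rat]_((2 * g) * (2 * g), p)),
    map_mx (fun z : int => z%:~R : rat) (invmx U) *m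
      (map_mx (fun z : int => z%:~R : rat) U *m A) = A.
  by move=> p A; rewrite mulmxA -map_mxM mulVmx // map_mx1 mul1mx.
have topE : forall p (c : 'M[rat]_(g, p)) r k,
    (map_mx (fun z : int => z%:~R : rat) H *m c) r k =
    (map_mx (fun z : int => z%:~R : rat) Hfull *m c) (widen_ord (le_g_sq g) r) k.
  by move=> p c r k; rewrite !mxE; apply: eq_bigr => j _; rewrite !mxE.
have hfullc : forall c : 'cV[rat]_g,
    map_mx (fun z : int => z%:~R : rat) Hfull *m c =
    map_mx (fun z : int => z%:~R : rat) U *m (d%:~R *: (stackM b *m c)).
  by move=> c; rewrite -hH map_mxM -mulmxA hN -scalemxAl.
pose xof := fun c : 'cV[rat]_g => \sum_i c i 0 *: alpha i.
have LemM : forall (c : 'cV[rat]_g) (j k : 'I_(2 * g)),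
    (stackM b *m c) (rjk j k) 0 = \sum_i b i j k * c i 0.
  by move=> c j k; rewrite !mxE; apply: eq_bigr => i _; rewrite mxE rjk_div rjk_mod.
have LemC : forall c j, xof c * omega j = \sum_k (\sum_i b i j k * c i 0) *: tau k.
  move=> c j; rewrite /xof mulr_suml.
  under eq_bigr do rewrite -scalerAl hb scaler_sumr.
  rewrite exchange_big /=; apply: eq_bigr => k _; rewrite scaler_suml.
  by apply: eq_bigr => i _; rewrite scalerA mulrC.
have [e1 he1] := (homS 1).1 (integral1 _).
have LemO : forall c, int_mx (stackM b *m c) ->
    forall y, integral y -> O (xof c * y).
  move=> c [W hW] y /(homS y) [f ->]; apply/(htauS _).2; rewrite mulr_sumr.
  have -> : \sum_j xof c * ((f j)%:~R *: omega j) =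
      \sum_j (f j)%:~R *: \sum_k ((W (rjk j k) 0)%:~R : rat) *: tau k.
    apply: eq_bigr => j _; rewrite -scalerAr LemC; congr (_ *: _).
    by apply: eq_bigr => k _; rewrite -LemM hW mxE.
  exact: zspan_comb.
have LemA : forall c : 'cV[rat]_g, stackM b *m c = 0 -> c = 0.
  move=> c hc.
  have hx : xof c = 0.
    rewrite -[xof c]mulr1 he1 mulr_sumr big1 // => j _.
    rewrite -scalerAr LemC big1 ?scaler0 // => k _.
    by rewrite -LemM hc mxE scale0r.
  have h := qfree halF (fun i => c i 0) hx.
  by apply/matrixP => i k; rewrite (ord1 k) mxE h.
have LemInt : forall c : 'cV[int]_g,
    conductor O (xof (map_mx (fun z : int => z%:~R : rat) c)) ->
    int_mx (stackM b *m map_mx (fun z : int => z%:~R : rat) c).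
  move=> c hcond; apply: int_mxP => r k; rewrite (ord1 k).
  set cq := map_mx _ c.
  set j := Ordinal (stack_div_lt r); set kk := Ordinal (stack_mod_lt r).
  have := hcond _ ((homS _).2 (zspan_basis omega j)).
  move/(htauS _).1 => [t ht]; rewrite LemC in ht.
  have hsum : \sum_k (\sum_i b i j k * cq i 0 - (t k)%:~R) *: tau k = 0.
    by under eq_bigr do rewrite scalerBl; rewrite sumrB ht subrr.
  have /eqP := qfree htauF _ hsum kk; rewrite subr_eq0 => /eqP hs.
  by exists (t kk); rewrite -hs mxE; apply: eq_bigr => i _; rewrite mxE.
have Hunit : map_mx (fun z : int => z%:~R : rat) H \in unitmx.
  rewrite unitmxE unitfE -det_tr; apply/negP => /det0P [v vn0 hv].
  have hc : map_mx (fun z : int => z%:~R : rat) H *m v^T = 0.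
    by rewrite -[map_mx _ H]trmxK -trmx_mul hv trmx0.
  have hf : map_mx (fun z : int => z%:~R : rat) Hfull *m v^T = 0.
    apply/matrixP => r k; case: (ltnP r g) => hrg.
      have := congr1 (fun A : 'M[rat]_(g, 1) => A (Ordinal hrg) k) hc; rewrite /= topE.
      have -> : widen_ord (le_g_sq g) (Ordinal hrg) = r by apply: val_inj.
      by move=> ->; rewrite !mxE.
    by rewrite !mxE big1 // => j _; rewrite mxE part1 // mul0r.
  have : stackM b *m v^T = 0.
    have := hfullc v^T; rewrite hf => /(congr1 (mulmx (map_mx (fun z : int => z%:~R : rat) (invmx U)))).
    rewrite UK mulmx0 => /esym/eqP; rewrite scalemx_eq0 intr_eq0 (negbTE d0) /=.
    by move/eqP.
  move/LemA => /(congr1 trmx); rewrite trmxK trmx0 => v0.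
  by rewrite v0 eqxx in vn0.
pose ecol := fun e : 'I_g -> int => \col_j ((e j)%:~R : rat).
have betaE : forall e : 'I_g -> int,
    \sum_j (e j)%:~R *: beta j = xof (d%:~R *: (Hinv *m ecol e)).
  move=> e; rewrite /xof /beta.
  under eq_bigr do rewrite scaler_sumr.
  rewrite exchange_big /=; apply: eq_bigr => i _.
  rewrite !mxE mulr_sumr scaler_suml; apply: eq_bigr => j _.
  rewrite scalerA !mxE; congr (_ *: _); ring.
split => // x; split.
  move=> [hcond [hxF hxint]].
  have [c hc] := (halS x).1 (conj hxF hxint).
  set cq := ecol c.
  have hx : x = xof cq by rewrite hc /xof; apply: eq_bigr => i _; rewrite mxE.
  rewrite hx in hcond.
  have cqE : cq = map_mx (fun z : int => z%:~R : rat) (\col_i c i).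
    by apply/matrixP => i k; rewrite !mxE.
  have [W hW] : int_mx (stackM b *m cq) by rewrite cqE; apply: LemInt; rewrite -cqE.
  have hHf : map_mx (fun z : int => z%:~R : rat) Hfull *m cq =
      d%:~R *: map_mx (fun z : int => z%:~R : rat) (U *m W).
    by rewrite hfullc hW map_mxM scalemxAr.
  pose e := fun j : 'I_g => (U *m W) (widen_ord (le_g_sq g) j) 0.
  have hHc : map_mx (fun z : int => z%:~R : rat) H *m cq = d%:~R *: ecol e.
    apply/matrixP => i k; by rewrite (ord1 k) topE hHf !mxE /e mxE.
  have cqD : cq = d%:~R *: (Hinv *m ecol e) by rewrite scalemxAr -hHc mulKmx.
  by exists e; rewrite betaE -cqD.
move=> [e ->]; rewrite betaE.
set cq := d%:~R *: (Hinv *m ecol e).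
have hHc : map_mx (fun z : int => z%:~R : rat) H *m cq = d%:~R *: ecol e.
  by rewrite /cq -scalemxAr mulKVmx.
pose E : 'cV[int]_((2 * g) * (2 * g)) :=
  \col_r (oapp e 0 (insub (val r) : option 'I_g)).
have hE : map_mx (fun z : int => z%:~R : rat) Hfull *m cq =
    d%:~R *: map_mx (fun z : int => z%:~R : rat) E.
  apply/matrixP => r k; rewrite (ord1 k); case: (ltnP r g) => hrg.
    have := congr1 (fun A : 'M[rat]_(g, 1) => A (Ordinal hrg) 0) hHc; rewrite /= topE.
    have -> : widen_ord (le_g_sq g) (Ordinal hrg) = r by apply: val_inj.
    move=> ->; rewrite !mxE (@insubT _ (fun m : nat => (m < g)%N) 'I_g (val r) hrg) /=.
    by congr (_ * _%:~R); congr e; apply: val_inj.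
  rewrite !mxE big1; last by move=> j _; rewrite mxE part1 // mul0r.
  by rewrite insubF ?mulr0 //; apply/negbTE; rewrite -leqNgt.
have hM : stackM b *m cq = map_mx (fun z : int => z%:~R : rat) (invmx U *m E).
  have := hfullc cq; rewrite hE.
  move=> /(congr1 (mulmx (map_mx (fun z : int => z%:~R : rat) (invmx U)))).
  rewrite UK -scalemxAr -map_mxM => /(congr1 (fun A : 'M[rat]_((2 * g) * (2 * g), 1) => d%:~R^-1 *: A)).
  by rewrite /= !scalerA mulVf ?intr_eq0 // !scale1r.
have hint : int_mx (stackM b *m cq) by exists (invmx U *m E).
have hcond := LemO cq hint.
have hO1 : O (xof cq) by rewrite -[xof cq]mulr1; apply: hcond; exact: integral1.
have hF : xof cq \in F.
  apply: memv_suml => i _; apply: memvZ.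
  by have [] := (halS (alpha i)).2 (zspan_basis alpha i).
split; first by move=> y; exact: hcond.
split => //; exact: ((hOF _).1 (conj hO1 hF)).2.
Qed.
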